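(* Let $f_1,f_2,f_3,f_4$ be strongly hyperbolic functions with $f_1(1)=f_3(1)=1$. The plane $\mathcal{M}(f_1,f_2;f_3,f_4)$ is isomorphic to the classical flat Minkowski plane if and only if $f_i(x)=1/x$ for $i=1,2,3,4$.
   Context: Identify $\mathbb{S}^1$ with $\mathbb{R}\cup\{\infty\}$, $\mathcal{P}=\mathbb{S}^1\times\mathbb{S}^1$, $\mathbb{R}^+=(0,\infty)$. A function $f:\mathbb{R}^+\to\mathbb{R}^+$ is strongly hyperbolic if: (1) $\lim_{x\to0+}f(x)=+\infty$, $\lim_{x\to+\infty}f(x)=0$; (2) $f$ strictly convex; (3) $\lim_{x\to+\infty}f(x+b)/f(x)=1$ for each $b\in\mathbb{R}$; (4) $f$ differentiable; (5) $\ln|f'|$ strictly convex. For strongly hyperbolic $f_1,f_2$, $a>0$, $b,c\in\mathbb{R}$: $f_{a,b,c}(x)=af_1(x+b)+c$ for $x>-b$, $f_{a,b,c}(x)=-af_2(-x-b)+c$ for $x<-b$; $\overline{f_{a,b,c}}=\{(x,f_{a,b,c}(x)):x\ne-b\}\cup\{(-b,\infty),(\infty,c)\}$; $\overline{l_{s,t}}=\{(x,sx+t):x\in\mathbb{R}\}\cup\{(\infty,\infty)\}$; $\mathcal{C}^-(f_1,f_2)=\{\overline{f_{a,b,c}}:a>0,b,c\in\mathbb{R}\}\cup\{\overline{l_{s,t}}:s<0\}$; $\mathcal{C}^+(f_1,f_2)=\varphi(\mathcal{C}^-(f_1,f_2))$ with $\varphi(x,y)=(-x,y)$, $-\infty=\infty$.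 The plane $\mathcal{M}(f_1,f_2;f_3,f_4)$ has point set $\mathcal{P}$ and circle set $\mathcal{C}^-(f_1,f_2)\cup\mathcal{C}^+(f_3,f_4)$. The classical flat Minkowski plane has point set $\mathcal{P}$ and circles the sets $\{(x,sx+t):x\in\mathbb{R}\}\cup\{(\infty,\infty)\}$ ($s\ne0$, $t\in\mathbb{R}$) and $\{(x,y)\in\mathbb{R}^2:(x-b)(y-c)=a\}\cup\{(\infty,c),(b,\infty)\}$ ($a\ne0$, $b,c\in\mathbb{R}$). An isomorphism between two such planes is a bijection of point sets mapping circles onto circles and inducing a bijection of the circle sets. *)

(* Defs.v *)
From Stdlib Require Import Reals.
From Coquelicot Require Import Coquelicot.
Open Scope R_scope.

(** S^1 = R ∪ {∞} is modelled by [option R], with [None] = ∞. *)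
Definition S1 := option R.
Definition point := (S1 * S1)%type.
Definition pset := point -> Prop.
Definition circle_set := pset -> Prop.

Definition strictly_convex_pos (g : R -> R) : Prop :=
  forall x y t, 0 < x -> 0 < y -> x <> y -> 0 < t < 1 ->
    g (t * x + (1 - t) * y) < t * g x + (1 - t) * g y.

(** Strongly hyperbolic function f : R^+ -> R^+ (f is a total function on R,
    only its values on (0,+oo) matter). *)
Definition strongly_hyperbolic (f : R -> R) : Prop :=
  (forall x, 0 < x -> 0 < f x) /\
  filterlim f (at_right 0) (Rbar_locally p_infty) /\
  filterlim f (Rbar_locally p_infty) (locally 0) /\
  strictly_convex_pos f /\
  (forall b : R, filterlim (fun x => f (x + b) / f x)
                            (Rbar_locally p_infty) (locally 1)) /\
  (forall x, 0 < x -> ex_derive f x) /\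
  strictly_convex_pos (fun x => ln (Rabs (Derive f x))).

Definition fabc_curve (f1 f2 : R -> R) (a b c : R) : pset :=
  fun p => match p with
  | (Some x, Some y) =>
      (-b < x /\ y = a * f1 (x + b) + c) \/ (x < -b /\ y = - a * f2 (- x - b) + c)
  | (Some x, None) => x = - b
  | (None, Some y) => y = c
  | (None, None) => False
  end.

Definition line_curve (s t : R) : pset :=
  fun p => match p with
  | (Some x, Some y) => y = s * x + t
  | (None, None) => True
  | _ => False
  end.

Definition pset_eq (C D : pset) : Prop := forall p, C p <-> D p.

Definition Cminus (f1 f2 : R -> R) : circle_set :=
  fun C => (exists a b c, 0 < a /\ pset_eq C (fabc_curve f1 f2 a b c)) \/
           (exists s t, s < 0 /\ pset_eq C (line_curve s t)).

Definition negS1 (x : S1) : S1 :=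
  match x with Some r => Some (- r) | None => None end.
Definition phi (p : point) : point := (negS1 (fst p), snd p).

Definition image (s : point -> point) (C : pset) : pset :=
  fun q => exists p, C p /\ q = s p.

Definition Cplus (f1 f2 : R -> R) : circle_set :=
  fun C => exists D, Cminus f1 f2 D /\ pset_eq C (image phi D).

Definition M_circles (f1 f2 f3 f4 : R -> R) : circle_set :=
  fun C => Cminus f1 f2 C \/ Cplus f3 f4 C.

Definition hyperbola_curve (a b c : R) : pset :=
  fun p => match p with
  | (Some x, Some y) => (x - b) * (y - c) = a
  | (None, Some y) => y = c
  | (Some x, None) => x = b
  | (None, None) => False
  end.

Definition classical_circles : circle_set :=
  fun C => (exists s t, s <> 0 /\ pset_eq C (line_curve s t)) \/
           (exists a b c, a <> 0 /\ pset_eq C (hyperbola_curve a b c)).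

Definition bijective_pt (s : point -> point) : Prop :=
  (forall p q, s p = s q -> p = q) /\ (forall q, exists p, s p = q).

(** Isomorphism of planes with point set P: a bijection of points mapping
    circles onto circles and inducing a bijection of circle sets
    (injectivity of the induced map is automatic from injectivity of s). *)
Definition isomorphic (C1 C2 : circle_set) : Prop :=
  exists s : point -> point,
    bijective_pt s /\
    (forall C, C1 C -> C2 (image s C)) /\
    (forall D, C2 D -> exists C, C1 C /\ pset_eq D (image s C)).

(* Main.v *)
Require Import Defs.
From Stdlib Require Import Reals Lra.
From Coquelicot Require Import Coquelicot.
Open Scope R_scope.

Record Mq := mkMq { ma : R; mb : R; mc : R; md : R }.
Definition det (q : Mq) := ma q * md q - mb q * mc q.
Definition nrm (u v : R) : S1 := if Req_EM_T v 0 then None else Some (u / v).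
Definition mob (q : Mq) (x : S1) : S1 :=
  match x with
  | Some r => nrm (ma q * r + mb q) (mc q * r + md q)
  | None => nrm (ma q) (mc q)
  end.
Definition mmul (q1 q2 : Mq) : Mq :=
  mkMq (ma q1 * ma q2 + mb q1 * mc q2) (ma q1 * mb q2 + mb q1 * md q2)
       (mc q1 * ma q2 + md q1 * mc q2) (mc q1 * mb q2 + md q1 * md q2).
Definition minv (q : Mq) : Mq := mkMq (md q) (- mb q) (- mc q) (ma q).

Lemma nrm0 u : nrm u 0 = None.
Proof. unfold nrm; destruct (Req_EM_T 0 0); [reflexivity| lra]. Qed.
Lemma nrmS u v : v <> 0 -> nrm u v = Some (u / v).
Proof. intro H; unfold nrm; destruct (Req_EM_T v 0); [lra| reflexivity]. Qed.

Lemma nrm_scale k u v : k <> 0 -> nrm (k * u) (k * v) = nrm u v.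
Proof.
  intro Hk. destruct (Req_EM_T v 0) as [->|Hv].
  - rewrite Rmult_0_r, !nrm0; reflexivity.
  - rewrite !nrmS; auto. f_equal; field; auto.
Qed.

Lemma nrm_ext u v u' v' : u = u' -> v = v' -> nrm u v = nrm u' v'.
Proof. intros -> ->; reflexivity. Qed.

Lemma mob_nrm q u v : ~ (u = 0 /\ v = 0) ->
  mob q (nrm u v) = nrm (ma q * u + mb q * v) (mc q * u + md q * v).
Proof.
  intro H. destruct (Req_EM_T v 0) as [->|Hv].
  - rewrite nrm0; simpl. assert (u <> 0) by tauto.
    rewrite <- (nrm_scale u (ma q) (mc q)) by auto. apply nrm_ext; ring.
  - rewrite nrmS by auto; simpl.
    rewrite <- (nrm_scale (/ v) (ma q * u + mb q * v)) by (apply Rinv_neq_0_compat; auto).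
    apply nrm_ext; field; auto.
Qed.

Lemma mob_comp q1 q2 x : det q2 <> 0 -> mob q1 (mob q2 x) = mob (mmul q1 q2) x.
Proof.
  intro D; unfold det in D. destruct q1 as [a1 b1 c1 d1], q2 as [a2 b2 c2 d2]; simpl in *.
  destruct x as [r|]; simpl.
  - rewrite mob_nrm; simpl.
    + apply nrm_ext; ring.
    + intros [H1 H2]. apply D. nra.
  - rewrite mob_nrm; simpl.
    + apply nrm_ext; ring.
    + intros [H1 H2]. apply D. subst; ring.
Qed.

Lemma det_mul q1 q2 : det (mmul q1 q2) = det q1 * det q2.
Proof. unfold det; destruct q1, q2; simpl; ring. Qed.
Lemma det_inv q : det (minv q) = det q.
Proof. unfold det; destruct q; simpl; ring. Qed.

Lemma mob_scal k x : k <> 0 -> mob (mkMq k 0 0 k) x = x.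
Proof.
  intro Hk; destruct x as [r|]; simpl.
  - rewrite nrmS by lra. f_equal; field; auto.
  - apply nrm0.
Qed.

Lemma mob_inv_l q x : det q <> 0 -> mob (minv q) (mob q x) = x.
Proof.
  intro D. rewrite mob_comp by auto.
  replace (mmul (minv q) q) with (mkMq (det q) 0 0 (det q)).
  - apply mob_scal; auto.
  - unfold mmul, minv, det; destruct q; simpl; f_equal; ring.
Qed.

Lemma mob_inv_r q x : det q <> 0 -> mob q (mob (minv q) x) = x.
Proof.
  intro D. rewrite mob_comp by (rewrite det_inv; auto).
  replace (mmul q (minv q)) with (mkMq (det q) 0 0 (det q)).
  - apply mob_scal; auto.
  - unfold mmul, minv, det; destruct q; simpl; f_equal; ring.
Qed.

Lemma mob_inj q x y : det q <> 0 -> mob q x = mob q y -> x = y.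
Proof.
  intros D H. rewrite <- (mob_inv_l q x), <- (mob_inv_l q y) by auto. rewrite H; auto.
Qed.

Lemma two_trans u v : u <> v ->
  exists q, det q <> 0 /\ mob q u = None /\ mob q v = Some 0.
Proof.
  intro Huv. destruct u as [a|], v as [b|].
  - exists (mkMq 1 (- b) 1 (- a)). unfold det; simpl. assert (a <> b) by congruence.
    split; [lra|]. split.
    + replace (1 * a + - a) with 0 by ring. apply nrm0.
    + rewrite nrmS by lra. f_equal. field. lra.
  - exists (mkMq 0 1 1 (- a)). unfold det; simpl. split; [lra|]. split.
    + replace (1 * a + - a) with 0 by ring. apply nrm0.
    + rewrite nrmS by lra. f_equal. field.
  - exists (mkMq 1 (- b) 0 1). unfold det; simpl. split; [lra|]. split.
    + apply nrm0.
    + rewrite nrmS by lra. f_equal. field.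
  - congruence.
Qed.
Definition graph (h : S1 -> S1) : pset := fun p => snd p = h (fst p).
Definition Diff (p q : point) : Prop := fst p <> fst q /\ snd p <> snd q.
Definition joinable (CS : circle_set) (p q : point) : Prop :=
  exists C, CS C /\ C p /\ C q.

Lemma nrm_Some u v y : nrm u v = Some y <-> v <> 0 /\ y = u / v.
Proof.
  unfold nrm; destruct (Req_EM_T v 0); split; intro H.
  - discriminate. - tauto. - inversion H; auto. - destruct H as [_ ->]; auto.
Qed.
Lemma nrm_None u v : nrm u v = None <-> v = 0.
Proof.
  unfold nrm; destruct (Req_EM_T v 0); split; intro H; auto; try discriminate; tauto.
Qed.

Lemma pset_eq_trans A B C : pset_eq A B -> pset_eq B C -> pset_eq A C.
Proof. unfold pset_eq; intros H1 H2 p; rewrite H1; auto. Qed.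
Lemma pset_eq_sym A B : pset_eq A B -> pset_eq B A.
Proof. unfold pset_eq; intros H p; rewrite H; tauto. Qed.

Lemma line_mob s t : s <> 0 -> pset_eq (line_curve s t) (graph (mob (mkMq s t 0 1))).
Proof.
  intros Hs [[x|] [y|]]; unfold graph; simpl.
  - rewrite (proj2 (nrm_Some _ _ _) (conj (ltac:(lra) : 0 * x + 1 <> 0) eq_refl)).
    split; intro H. + subst; f_equal; field. + inversion H; field.
  - rewrite nrmS by lra. split; intro H; [contradiction | discriminate].
  - rewrite nrm0. split; intro H; [contradiction | discriminate].
  - rewrite nrm0. tauto.
Qed.

Lemma hyp_mob a b c : a <> 0 ->
  pset_eq (hyperbola_curve a b c) (graph (mob (mkMq c (a - c * b) 1 (- b)))).
Proof.
  intros Ha [[x|] [y|]]; unfold graph; simpl.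
  - destruct (Req_EM_T x b) as [->|Hxb].
    + replace (1 * b + - b) with 0 by ring. rewrite nrm0.
      split; intro H; [| discriminate]. exfalso; apply Ha; rewrite <- H; ring.
    + rewrite nrmS by lra. split; intro H.
      * f_equal. apply (Rmult_eq_reg_l (x - b)); [|lra].
        replace ((x - b) * ((c * x + (a - c * b)) / (1 * x + - b))) with (c * x + (a - c * b))
          by (field; lra). rewrite <- H; ring.
      * inversion H. field. lra.
  - destruct (Req_EM_T x b) as [->|Hxb].
    + replace (1 * b + - b) with 0 by ring. rewrite nrm0. tauto.
    + rewrite nrmS by lra. split; intro H; [contradiction | discriminate].
  - rewrite nrmS by lra. split; intro H.
    + subst; f_equal; field.
    + inversion H; field.
  - rewrite nrmS by lra. split; intro H; [contradiction | discriminate].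
Qed.

Lemma cl_to_mob D : classical_circles D ->
  exists q, det q <> 0 /\ pset_eq D (graph (mob q)).
Proof.
  intros [[s [t [Hs HD]]] | [a [b [c [Ha HD]]]]].
  - exists (mkMq s t 0 1). split. + unfold det; simpl; lra.
    + eapply pset_eq_trans; [exact HD| apply line_mob; auto].
  - exists (mkMq c (a - c * b) 1 (- b)). split. + unfold det; simpl; lra.
    + eapply pset_eq_trans; [exact HD| apply hyp_mob; auto].
Qed.

Lemma mob_to_cl q : det q <> 0 -> classical_circles (graph (mob q)).
Proof.
  destruct q as [a b c d]; unfold det; simpl; intro D.
  destruct (Req_EM_T c 0) as [->|Hc].
  - left. assert (Hd : d <> 0) by (intro; apply D; subst; ring).
    assert (Ha : a <> 0) by (intro; apply D; subst; ring).
    assert (Hs : a / d <> 0).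
    { intro H. apply Ha. apply (Rmult_eq_reg_r (/ d)); [|apply Rinv_neq_0_compat; auto].
      rewrite Rmult_0_l. exact H. }
    exists (a / d), (b / d). split; [exact Hs|].
    eapply pset_eq_trans; [| apply pset_eq_sym, line_mob; exact Hs].
    intros [[x|] [y|]]; unfold graph; simpl; repeat rewrite nrm0; try rewrite !nrmS by lra;
      try tauto.
    + replace ((a / d * x + b / d) / (0 * x + 1)) with ((a * x + b) / (0 * x + d))
        by (field; auto). tauto.
    + split; intro H; discriminate.
  - right. assert (Hcc : c * c <> 0) by (intro H'; apply Rmult_integral in H'; tauto).
    exists ((b * c - a * d) / (c * c)), (- d / c), (a / c). split.
    + intro H. unfold Rdiv in H. apply Rmult_integral in H. destruct H as [H|H].
      * apply D; lra.
      * revert H; apply Rinv_neq_0_compat; auto.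
    + intros [[x|] [y|]]; unfold graph; simpl.
      * destruct (Req_EM_T (c * x + d) 0) as [Hz|Hz].
        -- rewrite Hz, nrm0. split; intro H; [discriminate|]. exfalso.
           assert (Hx : x = - d / c) by (replace x with ((c*x+d - d)/c) by (field; auto); rewrite Hz; field; auto).
           apply D.
           replace (x - - d / c) with 0 in H by (rewrite Hx; field; auto).
           assert (H0 : (b * c - a * d) / (c * c) * (c * c) = 0) by (rewrite <- H; ring).
           field_simplify in H0; auto. lra.
        -- rewrite nrmS by auto. split; intro H.
           ++ inversion H. field. auto.
           ++ f_equal. apply (Rmult_eq_reg_l (c * (c * x + d))).
              ** replace (c * (c * x + d) * ((a * x + b) / (c * x + d))) with (c * (a * x + b)) by (field; auto).
                 assert (H0 : (x - - d / c) * (y - a / c) * (c * c) = b * c - a * d)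
                   by (rewrite H; field; auto).
                 replace (x - - d / c) with ((c * x + d) / c) in H0 by (field; auto).
                 replace (y - a / c) with ((c * y - a) / c) in H0 by (field; auto).
                 field_simplify in H0; auto. lra.
              ** intro H'; apply Rmult_integral in H'; tauto.
      * destruct (Req_EM_T (c * x + d) 0) as [Hz|Hz].
        -- rewrite Hz, nrm0. split; intro; auto. replace x with ((c*x+d - d)/c) by (field; auto); rewrite Hz; field; auto.
        -- rewrite nrmS by auto. split; intro H; [discriminate|]. exfalso. apply Hz.
           rewrite H. field. auto.
      * rewrite nrmS by auto. split; intro H; [inversion H; auto | subst; auto].
      * rewrite nrmS by auto. split; intro H; [discriminate|contradiction].
Qed.

Lemma graph_inj_Diff h p q : (forall x y, h x = h y -> x = y) ->
  graph h p -> graph h q -> p <> q -> Diff p q.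
Proof.
  destruct p as [x1 y1], q as [x2 y2]; unfold graph, Diff; simpl; intros Hi H1 H2 Hne.
  split; intro E; apply Hne.
  - subst x2; rewrite H1, H2; reflexivity.
  - assert (x1 = x2) by (apply Hi; rewrite <- H1, <- H2; auto). subst; reflexivity.
Qed.

Lemma C1 p q : joinable classical_circles p q -> p <> q -> Diff p q.
Proof.
  intros [D [HD [Hp Hq]]] Hne. destruct (cl_to_mob D HD) as [g [Dg Hg]].
  apply (graph_inj_Diff (mob g)); auto.
  - intros; eapply mob_inj; eauto.
  - apply Hg; auto.
  - apply Hg; auto.
Qed.

Lemma C2 p q : Diff p q -> joinable classical_circles p q.
Proof.
  destruct p as [x1 y1], q as [x2 y2]; unfold Diff; simpl; intros [Hx Hy].
  destruct (two_trans x1 x2 Hx) as [n [Dn [Hn1 Hn2]]].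
  destruct (two_trans y1 y2 Hy) as [m [Dm [Hm1 Hm2]]].
  exists (graph (mob (mmul (minv m) n))). split.
  - apply mob_to_cl. rewrite det_mul, det_inv. intro H; apply Rmult_integral in H; tauto.
  - unfold graph; simpl. rewrite <- !mob_comp by auto. rewrite Hn1, Hn2, <- Hm1, <- Hm2.
    rewrite !mob_inv_l by auto. auto.
Qed.
Definition good (f : R -> R) : Prop :=
  (forall x, 0 < x -> 0 < f x) /\ (forall x y, 0 < x -> 0 < y -> f x = f y -> x = y).

Definition fh (f1 f2 : R -> R) (a b c : R) (x : S1) : S1 :=
  match x with
  | Some r => if Rlt_dec (- b) r then Some (a * f1 (r + b) + c)
              else if Rlt_dec r (- b) then Some (- a * f2 (- r - b) + c) else None
  | None => Some c
  end.
Definition lh (s t : R) (x : S1) : S1 :=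
  match x with Some r => Some (s * r + t) | None => None end.

Definition injS (h : S1 -> S1) := forall x y, h x = h y -> x = y.

Lemma fabc_graph f1 f2 a b c : pset_eq (fabc_curve f1 f2 a b c) (graph (fh f1 f2 a b c)).
Proof.
  intros [[x|] [y|]]; unfold graph; simpl.
  - destruct (Rlt_dec (- b) x); [|destruct (Rlt_dec x (- b))].
    + split; [intros [[_ H]|[H _]]; [subst; auto|lra] | intro H; inversion H; left; auto].
    + split; [intros [[H _]|[_ H]]; [lra|subst; auto] | intro H; inversion H; right; auto].
    + split; [intros [[H _]|[H _]]; lra | discriminate].
  - destruct (Rlt_dec (- b) x); [|destruct (Rlt_dec x (- b))].
    + split; [lra|discriminate]. + split; [lra|discriminate]. + split; [auto|lra].
  - split; [intro; subst; auto| intro H; inversion H; auto].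
  - split; [tauto|discriminate].
Qed.

Lemma line_graph s t : pset_eq (line_curve s t) (graph (lh s t)).
Proof.
  intros [[x|] [y|]]; unfold graph; simpl; split; intro H; try discriminate; try tauto.
  - subst; auto. - inversion H; auto.
Qed.

Lemma fh_inj f1 f2 a b c : 0 < a -> good f1 -> good f2 -> injS (fh f1 f2 a b c).
Proof.
  intros Ha [P1 I1] [P2 I2] [x|] [y|]; simpl.
  - destruct (Rlt_dec (- b) x) as [h1|h1]; [|destruct (Rlt_dec x (- b)) as [h2|h2]];
    destruct (Rlt_dec (- b) y) as [h3|h3]; try destruct (Rlt_dec y (- b)) as [h4|h4];
    intro H; try discriminate; try (inversion H as [H']; clear H).
    all: try first [ f_equal; lra
      | f_equal; assert (E : f1 (x + b) = f1 (y + b)) by (apply (Rmult_eq_reg_l a); lra);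
        apply I1 in E; lra
      | f_equal; assert (E : f2 (- x - b) = f2 (- y - b)) by (apply (Rmult_eq_reg_l a); lra);
        apply I2 in E; lra
      | assert (0 < f1 (x + b)) by (apply P1; lra); assert (0 < f2 (- y - b)) by (apply P2; lra); nra
      | assert (0 < f1 (y + b)) by (apply P1; lra); assert (0 < f2 (- x - b)) by (apply P2; lra); nra ].
  - destruct (Rlt_dec (- b) x) as [h1|h1]; [|destruct (Rlt_dec x (- b)) as [h2|h2]];
      intro H; try discriminate; inversion H as [H'].
    + specialize (P1 (x + b) ltac:(lra)). nra.
    + specialize (P2 (- x - b) ltac:(lra)). nra.
  - destruct (Rlt_dec (- b) y) as [h1|h1]; [|destruct (Rlt_dec y (- b)) as [h2|h2]];
      intro H; try discriminate; inversion H as [H'].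
    + specialize (P1 (y + b) ltac:(lra)). nra.
    + specialize (P2 (- y - b) ltac:(lra)). nra.
  - auto.
Qed.

Lemma lh_inj s t : s <> 0 -> injS (lh s t).
Proof.
  intros Hs [x|] [y|]; simpl; intro H; try discriminate; auto.
  inversion H as [H']. f_equal. apply (Rmult_eq_reg_l s); lra.
Qed.

Lemma phi_inv p : phi (phi p) = p.
Proof. destruct p as [[x|] y]; unfold phi; simpl; auto. rewrite Ropp_involutive; auto. Qed.

Lemma image_phi D : pset_eq (image phi D) (fun p => D (phi p)).
Proof.
  intro p; split.
  - intros [p' [H ->]]. rewrite phi_inv; auto.
  - intro H. exists (phi p). rewrite phi_inv; auto.
Qed.

Lemma negS1_inv x : negS1 (negS1 x) = x.
Proof. destruct x; simpl; auto. rewrite Ropp_involutive; auto. Qed.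

Lemma graph_phi h : pset_eq (fun p => graph h (phi p)) (graph (fun x => h (negS1 x))).
Proof. intros [x y]; unfold graph, phi; simpl; tauto. Qed.

Lemma injS_neg h : injS h -> injS (fun x => h (negS1 x)).
Proof.
  intros H x y E. apply H in E. rewrite <- (negS1_inv x), <- (negS1_inv y), E; auto.
Qed.

Lemma Cminus_graph (f1 f2 : R -> R) (K : pset) : good f1 -> good f2 -> Defs.Cminus f1 f2 K ->
  exists h, injS h /\ pset_eq K (graph h).
Proof.
  intros G1 G2 [[a [b [c [Ha HC]]]] | [s [t [Hs HC]]]].
  - exists (fh f1 f2 a b c). split; [apply fh_inj; auto|].
    eapply pset_eq_trans; [exact HC| apply fabc_graph].
  - exists (lh s t). split; [apply lh_inj; lra|].
    eapply pset_eq_trans; [exact HC| apply line_graph].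
Qed.

Lemma M_graph (f1 f2 f3 f4 : R -> R) (K : pset) : good f1 -> good f2 -> good f3 -> good f4 ->
  M_circles f1 f2 f3 f4 K -> exists h, injS h /\ pset_eq K (graph h).
Proof.
  intros G1 G2 G3 G4 [H | [D [HD HC]]].
  - apply Cminus_graph with f1 f2; auto.
  - destruct (Cminus_graph f3 f4 D G3 G4 HD) as [h [Hi Hh]].
    exists (fun x => h (negS1 x)). split; [apply injS_neg; auto|].
    eapply pset_eq_trans; [exact HC|]. eapply pset_eq_trans; [apply image_phi|].
    eapply pset_eq_trans; [|apply graph_phi]. intro p; apply Hh.
Qed.

Lemma M1 f1 f2 f3 f4 p q : good f1 -> good f2 -> good f3 -> good f4 ->
  joinable (M_circles f1 f2 f3 f4) p q -> p <> q -> Diff p q.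
Proof.
  intros G1 G2 G3 G4 [C [HC [Hp Hq]]] Hne.
  destruct (M_graph f1 f2 f3 f4 C G1 G2 G3 G4 HC) as [h [Hi Hh]].
  apply (graph_inj_Diff h); auto; apply Hh; auto.
Qed.
Lemma joinable_sym CS p q : joinable CS p q -> joinable CS q p.
Proof. intros [C [H [H1 H2]]]; exists C; auto. Qed.
Lemma Diff_sym p q : Diff p q -> Diff q p.
Proof. unfold Diff; intros [H1 H2]; split; auto. Qed.

Section M2.
Variables f1 f2 f3 f4 : R -> R.
Hypothesis G1 : good f1.
Hypothesis G2 : good f2.
Let MC := M_circles f1 f2 f3 f4.

Lemma Jm_fabc a b c p q : 0 < a -> fabc_curve f1 f2 a b c p -> fabc_curve f1 f2 a b c q ->
  joinable MC p q.
Proof.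
  intros Ha Hp Hq. exists (fabc_curve f1 f2 a b c). split; auto.
  left; left; exists a, b, c; split; auto. intro; tauto.
Qed.

Lemma Jm_line s t p q : s < 0 -> line_curve s t p -> line_curve s t q -> joinable MC p q.
Proof.
  intros Hs Hp Hq. exists (line_curve s t). split; auto.
  left; right; exists s, t; split; auto. intro; tauto.
Qed.

Lemma Jm_pline s t p q : s < 0 -> line_curve s t (phi p) -> line_curve s t (phi q) ->
  joinable MC p q.
Proof.
  intros Hs Hp Hq. exists (image phi (line_curve s t)). split.
  - right. exists (line_curve s t). split; [right; exists s, t; split; auto; intro; tauto|].
    intro; tauto.
  - split; apply image_phi; auto.
Qed.

Lemma J_FF x1 y1 x2 y2 : x1 <> x2 -> y1 <> y2 ->
  joinable MC (Some x1, Some y1) (Some x2, Some y2).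
Proof.
  intros Hx Hy. set (m := (y2 - y1) / (x2 - x1)).
  assert (Hm : y2 - y1 = m * (x2 - x1)) by (unfold m; field; lra).
  destruct (Rlt_dec m 0) as [Hn|Hn].
  - apply (Jm_line m (y1 - m * x1)); auto; simpl; nra.
  - assert (m <> 0) by (intro E; rewrite E in Hm; lra).
    apply (Jm_pline (- m) (y1 - m * x1)); [lra| |]; unfold phi; simpl; nra.
Qed.

Lemma J_NN_FF x y : joinable MC (None, None) (Some x, Some y).
Proof. apply (Jm_line (-1) (y + x)); simpl; auto; lra. Qed.

Lemma J_NF_FN y1 x2 : joinable MC (None, Some y1) (Some x2, None).
Proof. apply (Jm_fabc 1 (- x2) y1); simpl; auto; lra. Qed.

Lemma J_NF_FF y1 x2 y2 : y1 <> y2 -> joinable MC (None, Some y1) (Some x2, Some y2).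
Proof.
  intro Hy. destruct G1 as [P1 _], G2 as [P2 _].
  pose proof (P1 1 ltac:(lra)). pose proof (P2 1 ltac:(lra)).
  destruct (Rlt_dec y1 y2).
  - apply (Jm_fabc ((y2 - y1) / f1 1) (1 - x2) y1); simpl; auto.
    + apply Rdiv_lt_0_compat; lra.
    + left. split; [lra|]. replace (x2 + (1 - x2)) with 1 by ring. field; lra.
  - apply (Jm_fabc ((y1 - y2) / f2 1) (-1 - x2) y1); simpl; auto.
    + apply Rdiv_lt_0_compat; lra.
    + right. split; [lra|]. replace (- x2 - (-1 - x2)) with 1 by ring. field; lra.
Qed.

Lemma J_FN_FF x1 x2 y2 : x1 <> x2 -> joinable MC (Some x1, None) (Some x2, Some y2).
Proof.
  intro Hx. destruct (Rlt_dec x1 x2).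
  - apply (Jm_fabc 1 (- x1) (y2 - 1 * f1 (x2 + - x1))); simpl; auto; try lra.
    all: try (left; split; [lra|ring]).
  - apply (Jm_fabc 1 (- x1) (y2 - - 1 * f2 (- x2 - - x1))); simpl; auto; try lra.
    all: try (right; split; [lra|ring]).
Qed.

Lemma M2 p q : Diff p q -> joinable MC p q.
Proof.
  destruct p as [[x1|] [y1|]], q as [[x2|] [y2|]]; unfold Diff; simpl; intros [Hx Hy];
    try congruence.
  - apply J_FF; congruence.
  - apply joinable_sym, J_FN_FF; congruence.
  - apply joinable_sym, J_NF_FF; congruence.
  - apply joinable_sym, J_NN_FF.
  - apply J_FN_FF; congruence.
  - apply joinable_sym, J_NF_FN.
  - apply J_NF_FF; congruence.
  - apply J_NF_FN.
  - apply J_NN_FF.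
Qed.
End M2.
From Stdlib Require Import Classical.

Definition Vr (p q : point) := fst p = fst q.
Definition Hr (p q : point) := snd p = snd q.
Definition Dpres (s : point -> point) :=
  forall p q, p <> q -> (Diff p q <-> Diff (s p) (s q)).
Definition swap (p : point) : point := (snd p, fst p).

Lemma VH_eq p q : Vr p q -> Hr p q -> p = q.
Proof. destruct p, q; unfold Vr, Hr; simpl; intros -> ->; auto. Qed.

Section Prod.
Variable s : point -> point.
Hypothesis Hinj : forall p q, s p = s q -> p = q.
Hypothesis Hd : Dpres s.

Lemma par_pres p q : p <> q -> (Vr p q \/ Hr p q) -> Vr (s p) (s q) \/ Hr (s p) (s q).
Proof.
  intros Hne HVH. apply NNPP; intro N. apply not_or_and in N.
  assert (Diff (s p) (s q)) by (unfold Diff; tauto).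
  apply Hd in H; auto. unfold Diff, Vr, Hr in *; tauto.
Qed.

Lemma npar_pres p q : p <> q -> ~ Vr p q -> ~ Hr p q -> ~ Vr (s p) (s q) /\ ~ Hr (s p) (s q).
Proof.
  intros Hne H1 H2. assert (Diff p q) by (unfold Diff; auto).
  apply Hd in H; auto.
Qed.

Lemma sne p q : p <> q -> s p <> s q.
Proof. intros H E; apply H, Hinj, E. Qed.

Definition T (p : point) := forall q, q <> p -> Vr p q -> Vr (s p) (s q).

Definition vn (p : point) : point :=
  (fst p, match snd p with None => Some 0 | Some _ => None end).
Lemma vn_ne p : vn p <> p.
Proof. destruct p as [x [y|]]; unfold vn; simpl; intro E; inversion E. Qed.
Lemma vn_V p : Vr p (vn p).
Proof. reflexivity. Qed.

Lemma T_H p r : T p -> r <> p -> Hr p r -> Hr (s p) (s r).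
Proof.
  intros Tp Hne Hh.
  destruct (par_pres p r ltac:(auto) (or_intror Hh)) as [HV|HH]; auto.
  exfalso. set (q := vn p).
  assert (Vq : Vr (s p) (s q)) by (apply Tp; [apply vn_ne| apply vn_V]).
  assert (nV : ~ Vr q r).
  { unfold Vr, Hr in *; unfold q, vn; simpl. intro E. apply Hne. apply VH_eq; unfold Vr, Hr; simpl in *; congruence. }
  assert (nH : ~ Hr q r).
  { unfold Vr, Hr in *; unfold q, vn; simpl. rewrite <- Hh.
    destruct (snd p); discriminate. }
  assert (q <> r) by (intro E; apply nV; rewrite E; reflexivity).
  destruct (npar_pres q r H nV nH) as [A _]. apply A.
  unfold Vr in *. congruence.
Qed.

Lemma T_V p q : T p -> q <> p -> Vr p q -> T q.
Proof.
  intros Tp Hne Hv r Hr' Hqr.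
  destruct (classic (r = p)) as [->|Hrp].
  - unfold Vr in *. symmetry. apply Tp; auto.
  - assert (Vr (s p) (s r)) by (apply Tp; auto; unfold Vr in *; simpl in *; congruence).
    assert (Vr (s p) (s q)) by (apply Tp; auto).
    unfold Vr in *; simpl in *; congruence.
Qed.

Lemma T_Hmove p r : T p -> r <> p -> Hr p r -> T r.
Proof.
  intros Tp Hne Hh q Hqr Hv.
  assert (Hs : Hr (s p) (s r)) by (apply T_H; auto).
  destruct (par_pres r q ltac:(auto) (or_introl Hv)) as [HV|HH]; auto.
  exfalso.
  assert (nV : ~ Vr p q).
  { unfold Vr, Hr in *. intro E. apply Hne. apply VH_eq; unfold Vr, Hr; congruence. }
  assert (nH : ~ Hr p q).
  { unfold Vr, Hr in *. intro E. apply Hqr. apply VH_eq; unfold Vr, Hr; congruence. }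
  assert (p <> q) by (intro E; apply nV; rewrite E; reflexivity).
  destruct (npar_pres p q H nV nH) as [_ B]. apply B. unfold Hr in *; simpl in *; congruence.
Qed.

Lemma T_all : T (None, None) -> forall p, T p.
Proof.
  intros T0 [x y].
  assert (T1 : T (None, y)).
  { destruct (classic ((None, y) = (None, None) :> point)) as [E|E].
    - rewrite E; auto.
    - apply T_V with (None, None); auto. reflexivity. }
  destruct (classic ((x, y) = (None, y) :> point)) as [E|E].
  - rewrite E; auto.
  - apply T_Hmove with (None, y); auto. reflexivity.
Qed.

Lemma prod_of_T : T (None, None) ->
  exists al be : S1 -> S1, forall x y, s (x, y) = (al x, be y).
Proof.
  intro T0. pose proof (T_all T0) as Ta.
  exists (fun x => fst (s (x, None))), (fun y => snd (s (None, y))).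
  intros x y. rewrite (surjective_pairing (s (x, y))). f_equal.
  - destruct (classic (y = None)) as [->|Hy]; auto.
    apply (Ta (x, y)); [intro E; inversion E; auto| reflexivity].
  - destruct (classic (x = None)) as [->|Hx]; auto.
    apply (T_H (x, y)); auto; [intro E; inversion E; auto| reflexivity].
Qed.

Lemma notT_swap : ~ T (None, None) ->
  forall q, q <> (None, None) -> Vr (None, None) q -> Hr (s (None, None)) (s q).
Proof.
  intros nT q Hq Hv. unfold T in nT.
  apply not_all_ex_not in nT. destruct nT as [q0 nT].
  apply imply_to_and in nT; destruct nT as [Hq0 nT].
  apply imply_to_and in nT; destruct nT as [Hv0 nV0].
  assert (H0 : Hr (s (None, None)) (s q0)).
  { destruct (par_pres (None, None) q0 ltac:(auto) (or_introl Hv0)); tauto. }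
  destruct (classic (q = q0)) as [->|Hne]; auto.
  destruct (par_pres (None, None) q ltac:(auto) (or_introl Hv)) as [HV|HH]; auto.
  exfalso.
  assert (Vqq : Vr q q0) by (unfold Vr in *; simpl in *; congruence).
  destruct (par_pres q q0 Hne (or_introl Vqq)) as [A|A].
  - apply nV0. unfold Vr in *; simpl in *; congruence.
  - apply (sne (None, None) q); auto. apply VH_eq; auto. unfold Hr in *; simpl in *; congruence.
Qed.
End Prod.

Lemma Dpres_swap s : Dpres s -> Dpres (fun p => swap (s p)).
Proof.
  intros H p q Hne. rewrite (H p q Hne). unfold Diff, swap; simpl; tauto.
Qed.

Lemma product s : (forall p q, s p = s q -> p = q) -> Dpres s ->
  (exists al be : S1 -> S1, forall x y, s (x, y) = (al x, be y)) \/
  (exists al be : S1 -> S1, forall x y, s (x, y) = (be y, al x)).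
Proof.
  intros Hi Hd. destruct (classic (T s (None, None))) as [T0|nT].
  - left. apply prod_of_T; auto.
  - right. set (s' := fun p => swap (s p)).
    assert (Hi' : forall p q, s' p = s' q -> p = q).
    { unfold s', swap; intros p q E. apply Hi.
      rewrite (surjective_pairing (s p)), (surjective_pairing (s q)).
      inversion E; f_equal; auto. }
    assert (T' : T s' (None, None)).
    { intros q Hq Hv. unfold s', swap, Vr; simpl.
      apply (notT_swap s Hi Hd nT q Hq Hv). }
    destruct (prod_of_T s' (Dpres_swap s Hd) T') as [al [be Hab]].
    exists al, be. intros x y. specialize (Hab x y). unfold s', swap in Hab.
    rewrite (surjective_pairing (s (x, y))). inversion Hab. auto.
Qed.
Lemma form_dil q : mob q None = None -> mob q (Some 0) = Some 0 ->
  exists k, forall v, mob q (Some v) = Some (k * v).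
Proof.
  destruct q as [a b c d]; simpl. intros H1 H2.
  apply nrm_None in H1. subst c. apply nrm_Some in H2. destruct H2 as [Hd H2].
  replace (0 * 0 + d) with d in * by ring. replace (a * 0 + b) with b in * by ring.
  assert (b = 0).
  { assert (E : b / d * d = 0) by (rewrite <- H2; ring). field_simplify in E; auto. }
  subst b. exists (a / d). intro v. rewrite nrmS by lra. f_equal. field. lra.
Qed.

Lemma form_inv q : mob q (Some 0) = None -> mob q None = Some 0 ->
  exists k, forall v, v <> 0 -> mob q (Some v) = Some (k / v).
Proof.
  destruct q as [a b c d]; simpl. intros H1 H2.
  apply nrm_None in H1. apply nrm_Some in H2. destruct H2 as [Hc H2].
  assert (d = 0) by lra. subst d.
  assert (a = 0).
  { assert (E : a / c * c = 0) by (rewrite <- H2; ring). field_simplify in E; auto. }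
  subst a. exists (b / c). intros v Hv. rewrite nrmS.
  - f_equal. field. auto.
  - replace (c * v + 0) with (c * v) by ring. intro E; apply Rmult_integral in E; tauto.
Qed.

Section Main.
Variables f1 f2 f3 f4 : R -> R.
Hypothesis G1 : good f1.
Hypothesis G2 : good f2.
Hypothesis G3 : good f3.
Hypothesis G4 : good f4.
Let MC := M_circles f1 f2 f3 f4.

Definition Mh (h : S1 -> S1) := exists C, MC C /\ forall x, C (x, h x).

Definition Pg (g : S1 -> S1) :=
  forall h, Mh h -> exists q, det q <> 0 /\ forall x, g (h x) = mob q (g x).

Lemma Mh_id : Mh (fun x => x).
Proof.
  exists (image phi (line_curve (-1) 0)). split.
  - right. exists (line_curve (-1) 0). split; [right; exists (-1), 0; split; [lra| intro; tauto]|].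
    intro; tauto.
  - intro x. apply image_phi. destruct x as [r|]; unfold phi; simpl; auto. ring.
Qed.

Lemma Mh_lin l : l <> 0 -> Mh (lh l 0).
Proof.
  intro Hl. destruct (Rlt_dec l 0) as [Hn|Hn].
  - exists (line_curve l 0). split.
    + left; right; exists l, 0; split; auto; intro; tauto.
    + intros [r|]; simpl; auto.
  - exists (image phi (line_curve (- l) 0)). split.
    + right. exists (line_curve (- l) 0). split; [right; exists (- l), 0; split; [lra| intro; tauto]|].
      intro; tauto.
    + intro x. apply image_phi. destruct x as [r|]; unfold phi; simpl; auto. ring.
Qed.

Lemma Mh_f : Mh (fh f1 f2 1 0 0).
Proof.
  exists (fabc_curve f1 f2 1 0 0). split.
  - left; left; exists 1, 0, 0; split; [lra| intro; tauto].
  - intro x. apply fabc_graph. reflexivity.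
Qed.

Lemma Mh_3 : Mh (fun x => fh f3 f4 1 0 0 (negS1 x)).
Proof.
  exists (image phi (fabc_curve f3 f4 1 0 0)). split.
  - right. exists (fabc_curve f3 f4 1 0 0). split; [left; exists 1, 0, 0; split; [lra| intro; tauto]|].
    intro; tauto.
  - intro x. apply image_phi. apply fabc_graph. reflexivity.
Qed.

Lemma fh_pos f g y : 0 < y -> fh f g 1 0 0 (Some y) = Some (f y).
Proof.
  intro H; simpl. destruct (Rlt_dec (- 0) y); [|lra]. f_equal. replace (y + 0) with y by ring. ring.
Qed.
Lemma fh_neg f g y : 0 < y -> fh f g 1 0 0 (Some (- y)) = Some (- g y).
Proof.
  intro H; simpl. destruct (Rlt_dec (- 0) (- y)); [lra|].
  destruct (Rlt_dec (- y) (- 0)); [|lra]. f_equal.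
  replace (- - y - 0) with y by ring. ring.
Qed.
Lemma fh_zero f g : fh f g 1 0 0 (Some 0) = None.
Proof.
  simpl. destruct (Rlt_dec (- 0) 0); [lra|]. destruct (Rlt_dec 0 (- 0)); [lra|]. auto.
Qed.

Lemma key : isomorphic MC classical_circles -> exists g, injS g /\ Pg g.
Proof.
  intros [s [[Hinj Hsurj] [Hf Hb]]].
  assert (Hd : Dpres s).
  { intros p q Hne. split; intro HD.
    - destruct (M2 f1 f2 f3 f4 G1 G2 p q HD) as [C [HC [Hp Hq]]].
      apply C1.
      + exists (image s C). split; [apply Hf; auto|].
        split; [exists p | exists q]; auto.
      + intro E; apply Hne, Hinj, E.
    - destruct (C2 _ _ HD) as [D [HD' [H1 H2]]].
      destruct (Hb D HD') as [C [HC HDC]].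
      apply HDC in H1. apply HDC in H2.
      destruct H1 as [p' [Hp' Ep]]. destruct H2 as [q' [Hq' Eq]].
      apply Hinj in Ep. apply Hinj in Eq. subst p' q'.
      apply (M1 f1 f2 f3 f4); auto. exists C; auto. }
  assert (Gr : forall h, Mh h -> exists q, det q <> 0 /\
            forall x, snd (s (x, h x)) = mob q (fst (s (x, h x)))).
  { intros h [C [HC Hh]]. destruct (cl_to_mob _ (Hf C HC)) as [q [Dq Hq]].
    exists q. split; auto. intro x. apply (Hq (s (x, h x))). exists (x, h x); auto. }
  destruct (product s Hinj Hd) as [[al [be Hab]] | [al [be Hab]]].
  - exists al. split.
    + intros x y E. assert (E2 : s (x, None) = s (y, None)) by (rewrite !Hab, E; auto).
      apply Hinj in E2. inversion E2; auto.
    + intros h Hh. destruct (Gr _ Mh_id) as [q1 [D1 H1]].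
      destruct (Gr _ Hh) as [q [Dq Hq]].
      exists (mmul (minv q1) q). split.
      * rewrite det_mul, det_inv. intro E; apply Rmult_integral in E; tauto.
      * intro x. specialize (Hq x). specialize (H1 (h x)). rewrite Hab in Hq, H1. simpl in *.
        rewrite <- mob_comp by auto. rewrite <- Hq, H1. rewrite mob_inv_l; auto.
  - exists be. split.
    + intros x y E. assert (E2 : s (None, x) = s (None, y)) by (rewrite !Hab, E; auto).
      apply Hinj in E2. inversion E2; auto.
    + intros h Hh. destruct (Gr _ Mh_id) as [q1 [D1 H1]].
      destruct (Gr _ Hh) as [q [Dq Hq]].
      exists (mmul (minv q) q1). split.
      * rewrite det_mul, det_inv. intro E; apply Rmult_integral in E; tauto.
      * intro x. specialize (Hq x). specialize (H1 x). rewrite Hab in Hq, H1. simpl in *.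
        rewrite <- mob_comp by auto. rewrite <- H1, Hq. rewrite mob_inv_l; auto.
Qed.

Lemma normalize g : injS g -> Pg g ->
  exists g', injS g' /\ Pg g' /\ g' None = None /\ g' (Some 0) = Some 0.
Proof.
  intros Hi Hp.
  assert (Hne : g None <> g (Some 0)) by (intro E; apply Hi in E; discriminate).
  destruct (two_trans _ _ Hne) as [n [Dn [N1 N2]]].
  exists (fun x => mob n (g x)). split; [|split; [|split]]; auto.
  - intros x y E. apply mob_inj in E; auto.
  - intros h Hh. destruct (Hp h Hh) as [q [Dq Hq]].
    exists (mmul n (mmul q (minv n))). split.
    + rewrite !det_mul, det_inv. intro E. apply Rmult_integral in E.
      destruct E as [E|E]; [tauto|]. apply Rmult_integral in E; tauto.
    + intro x. rewrite <- mob_comp.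
      * rewrite <- mob_comp by (rewrite det_inv; auto). rewrite mob_inv_l by auto.
        rewrite Hq; auto.
      * rewrite det_mul, det_inv. intro E; apply Rmult_integral in E; tauto.
Qed.

Lemma final : isomorphic MC classical_circles -> f1 1 = 1 -> f3 1 = 1 ->
  forall y, 0 < y -> f1 y = 1 / y /\ f2 y = 1 / y /\ f3 y = 1 / y /\ f4 y = 1 / y.
Proof.
  intros Hiso F1 F3.
  destruct (key Hiso) as [g0 [Hi0 Hp0]].
  destruct (normalize g0 Hi0 Hp0) as [g [Hi [Hp [GN G0]]]].
  set (dl := fun r => match g (Some r) with Some v => v | None => 0 end).
  assert (Hdl : forall r, g (Some r) = Some (dl r)).
  { intro r. unfold dl. destruct (g (Some r)) eqn:E; auto.
    rewrite <- GN in E. apply Hi in E. discriminate. }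
  assert (Dinj : forall r r', dl r = dl r' -> r = r').
  { intros r r' E. assert (g (Some r) = g (Some r')) by (rewrite !Hdl, E; auto).
    apply Hi in H. inversion H; auto. }
  assert (D0 : dl 0 = 0) by (pose proof (Hdl 0) as H; rewrite G0 in H; inversion H; auto).
  assert (Mul : forall l r, l <> 0 -> dl (l * r) * dl 1 = dl l * dl r).
  { intros l r Hl. destruct (Hp _ (Mh_lin l Hl)) as [q [Dq Hq]].
    pose proof (Hq None) as HN. simpl in HN. rewrite GN in HN.
    pose proof (Hq (Some 0)) as HZ. simpl in HZ. replace (l * 0 + 0) with 0 in HZ by ring.
    rewrite G0 in HZ.
    destruct (form_dil q (eq_sym HN) (eq_sym HZ)) as [k Hk].
    pose proof (Hq (Some r)) as Hr. pose proof (Hq (Some 1)) as H1. simpl in Hr, H1.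
    rewrite !Hdl, Hk in Hr, H1. inversion Hr as [Er]. inversion H1 as [E1].
    replace (l * r + 0) with (l * r) in Er by ring.
    replace (l * 1 + 0) with l in E1 by ring. rewrite Er, E1. ring. }
  set (e := dl 1).
  assert (He : e <> 0) by (intro E; rewrite <- D0 in E; apply Dinj in E; lra).
  assert (Dm1 : dl (-1) = - e).
  { pose proof (Mul (-1) (-1) ltac:(lra)) as H. replace (-1 * -1) with 1 in H by ring.
    fold e in H.
    assert (Hne : dl (-1) <> e) by (intro E; apply Dinj in E; lra).
    assert ((dl (-1) - e) * (dl (-1) + e) = 0) by nra.
    apply Rmult_integral in H0. destruct H0; [exfalso; apply Hne; lra | lra]. }
  assert (Dneg : forall v, dl (- v) = - dl v).
  { intro v. pose proof (Mul (-1) v ltac:(lra)) as H. replace (-1 * v) with (- v) in H by ring.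
    fold e in H. rewrite Dm1 in H. apply (Rmult_eq_reg_r e); auto. lra. }
  assert (Dinv : forall y, y <> 0 -> dl (1 / y) * dl y = e * e).
  { intros y Hy. pose proof (Mul y (1 / y) Hy) as H. replace (y * (1 / y)) with 1 in H by (field; auto).
    fold e in H. lra. }
  assert (Dnz : forall y, y <> 0 -> dl y <> 0).
  { intros y Hy E. rewrite <- D0 in E. apply Dinj in E. auto. }
  assert (Conc : forall y z, 0 < y -> dl z * dl y = e * e -> z = 1 / y).
  { intros y z Hy E. apply Dinj. apply (Rmult_eq_reg_r (dl y)); [|apply Dnz; lra].
    rewrite E, Dinv; auto; lra. }
  destruct (Hp _ Mh_f) as [q [Dq Hq]].
  pose proof (Hq None) as HN. simpl in HN. rewrite GN, G0 in HN.
  pose proof (Hq (Some 0)) as HZ. rewrite fh_zero, GN, G0 in HZ.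
  destruct (form_inv q (eq_sym HZ) (eq_sym HN)) as [c Hc].
  assert (HP : forall y, 0 < y -> dl (f1 y) = c / dl y).
  { intros y Hy. pose proof (Hq (Some y)) as H. rewrite fh_pos, !Hdl, Hc in H by (auto; apply Dnz; lra).
    inversion H; auto. }
  assert (HNg : forall y, 0 < y -> dl (- f2 y) = c / dl (- y)).
  { intros y Hy. pose proof (Hq (Some (- y))) as H.
    rewrite fh_neg, !Hdl, Hc in H by (auto; apply Dnz; lra). inversion H; auto. }
  assert (Hce : c = e * e).
  { pose proof (HP 1 ltac:(lra)) as H. rewrite F1 in H. fold e in H.
    assert (H0 : c = e * (c / e)) by (field; auto). rewrite <- H in H0. exact H0. }
  destruct (Hp _ Mh_3) as [q' [Dq' Hq']].
  pose proof (Hq' None) as HN'. simpl in HN'. rewrite GN, G0 in HN'.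
  pose proof (Hq' (Some 0)) as HZ'. simpl negS1 in HZ'. rewrite Ropp_0, fh_zero, GN, G0 in HZ'.
  destruct (form_inv q' (eq_sym HZ') (eq_sym HN')) as [c' Hc'].
  assert (HP3 : forall y, 0 < y -> dl (f3 y) = c' / dl (- y)).
  { intros y Hy. pose proof (Hq' (Some (- y))) as H. simpl negS1 in H.
    rewrite Ropp_involutive in H.
    rewrite fh_pos, !Hdl, Hc' in H by (auto; apply Dnz; lra). inversion H; auto. }
  assert (HP4 : forall y, 0 < y -> dl (- f4 y) = c' / dl y).
  { intros y Hy. pose proof (Hq' (Some y)) as H. simpl negS1 in H.
    rewrite fh_neg, !Hdl, Hc' in H by (auto; apply Dnz; lra). inversion H; auto. }
  assert (Hce' : c' = - (e * e)).
  { pose proof (HP3 1 ltac:(lra)) as H.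
    assert (Dm1b : dl (Ropp 1) = - e) by (rewrite <- Dm1; f_equal; ring).
    rewrite F3, Dm1b in H. fold e in H.
    assert (H0 : c' = (- e) * (c' / - e)) by (field; auto). rewrite <- H in H0.
    rewrite H0; ring. }
  intros y Hy. assert (Hdy : dl y <> 0) by (apply Dnz; lra).
  repeat split; apply Conc; auto.
  - rewrite HP by auto. rewrite Hce. field. auto.
  - pose proof (HNg y Hy) as H. rewrite Dneg, Dneg in H.
    assert (dl (f2 y) = c / dl y) by (rewrite <- (Ropp_involutive (dl (f2 y))), H; field; auto).
    rewrite H0, Hce. field. auto.
  - rewrite HP3, Dneg, Hce' by auto. field. auto.
  - pose proof (HP4 y Hy) as H. rewrite Dneg in H.
    assert (dl (f4 y) = - (c' / dl y)) by (rewrite <- H; ring).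
    rewrite H0, Hce'. field. auto.
Qed.

End Main.
Lemma sh_aux f x y z : strictly_convex_pos f -> 0 < x -> x < y -> y < z -> f x = f y -> f y < f z.
Proof.
  intros Hc Hx Hxy Hyz E.
  set (t := (z - y) / (z - x)).
  assert (Ht : 0 < t < 1).
  { unfold t; split. - apply Rdiv_lt_0_compat; lra.
    - apply (Rmult_lt_reg_r (z - x)); [lra|]. field_simplify; lra. }
  pose proof (Hc x z t Hx ltac:(lra) ltac:(lra) Ht) as H.
  replace (t * x + (1 - t) * z) with y in H by (unfold t; field; lra).
  rewrite <- E in H. assert ((1 - t) * f x < (1 - t) * f z) by lra.
  apply Rmult_lt_reg_l in H0; lra.
Qed.

Lemma sh_good f : strongly_hyperbolic f -> good f.
Proof.
  intros [Hpos [_ [Hlim [Hconv _]]]]. split; auto.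
  assert (A : forall x y, 0 < x -> x < y -> f x = f y -> False).
  { intros x y Hx Hxy E.
    pose proof (Hpos y ltac:(lra)) as Py.
    apply filterlim_locally with (eps := mkposreal _ Py) in Hlim.
    destruct Hlim as [M HM].
    set (z := Rmax M y + 1).
    assert (Hz1 : M < z) by (unfold z; pose proof (Rmax_l M y); lra).
    assert (Hz2 : y < z) by (unfold z; pose proof (Rmax_r M y); lra).
    specialize (HM z Hz1). pose proof (sh_aux f x y z Hconv Hx Hxy Hz2 E) as Hlt.
    change (Rabs (f z - 0) < f y) in HM. rewrite Rminus_0_r in HM.
    apply Rabs_def2 in HM. lra. }
  intros x y Hx Hy E. destruct (Rtotal_order x y) as [Hl|[Heq|Hg]]; auto; exfalso.
  - apply (A x y); auto.
  - apply (A y x); auto.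
Qed.
Lemma image_ext (A B : pset) : pset_eq A B -> pset_eq (image phi A) (image phi B).
Proof.
  intros H p. split; intros [q [Hq ->]]; exists q; split; auto; apply H; auto.
Qed.

Lemma phi_hyp a b c : pset_eq (image phi (hyperbola_curve a b c)) (hyperbola_curve (- a) (- b) c).
Proof.
  eapply pset_eq_trans; [apply image_phi|].
  intros [[x|] [y|]]; unfold phi; simpl; try tauto; try lra.
Qed.

Lemma phi_line s t : pset_eq (image phi (line_curve s t)) (line_curve (- s) t).
Proof.
  eapply pset_eq_trans; [apply image_phi|].
  intros [[x|] [y|]]; unfold phi; simpl; try tauto.
  split; intro H; rewrite H; ring.
Qed.

Section IfDir.
Variables f1 f2 f3 f4 : R -> R.
Hypothesis H1 : forall x, 0 < x -> f1 x = 1 / x.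
Hypothesis H2 : forall x, 0 < x -> f2 x = 1 / x.
Hypothesis H3 : forall x, 0 < x -> f3 x = 1 / x.
Hypothesis H4 : forall x, 0 < x -> f4 x = 1 / x.

Lemma fabc_hyp (g1 g2 : R -> R) a b c :
  (forall x, 0 < x -> g1 x = 1 / x) -> (forall x, 0 < x -> g2 x = 1 / x) -> 0 < a ->
  pset_eq (fabc_curve g1 g2 a b c) (hyperbola_curve a (- b) c).
Proof.
  intros E1 E2 Ha [[x|] [y|]]; simpl; try tauto; try lra.
  split.
  - intros [[Hx Hy]|[Hx Hy]].
    + rewrite Hy, E1 by lra. field. lra.
    + rewrite Hy, E2 by lra. field. lra.
  - intro H. destruct (Rtotal_order (- b) x) as [Hx|[Hx|Hx]].
    + left. split; auto. rewrite E1 by lra.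
      apply (Rmult_eq_reg_l (x + b)); [|lra].
      replace ((x + b) * (a * (1 / (x + b)) + c)) with (a + (x + b) * c) by (field; lra).
      rewrite <- H. ring.
    + exfalso. subst x. replace ((- b - - b) * (y - c)) with 0 in H by ring. lra.
    + right. split; auto. rewrite E2 by lra.
      apply (Rmult_eq_reg_l (x + b)); [|lra].
      replace ((x + b) * (- a * (1 / (- x - b)) + c)) with (a + (x + b) * c) by (field; lra).
      rewrite <- H. ring.
Qed.

Let MC := M_circles f1 f2 f3 f4.

Lemma cl_ext A B : classical_circles A -> pset_eq B A -> classical_circles B.
Proof.
  intros [[s [t [Hs E]]] | [a [b [c [Ha E]]]]] HB.
  - left; exists s, t; split; auto; eapply pset_eq_trans; eauto.
  - right; exists a, b, c; split; auto; eapply pset_eq_trans; eauto.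
Qed.

Lemma M_cl C : MC C -> classical_circles C.
Proof.
  intros [[[a [b [c [Ha E]]]] | [s [t [Hs E]]]] | [D [[[a [b [c [Ha E]]]] | [s [t [Hs E]]]] HC]]].
  - right. exists a, (- b), c. split; [lra|]. eapply pset_eq_trans; [exact E|]. apply fabc_hyp; auto.
  - left. exists s, t. split; [lra| auto].
  - right. exists (- a), (- - b), c. split; [lra|].
    eapply pset_eq_trans; [exact HC|]. eapply pset_eq_trans; [apply image_ext; exact E|].
    eapply pset_eq_trans; [apply image_ext, fabc_hyp; eauto|]. apply phi_hyp.
  - left. exists (- s), t. split; [lra|].
    eapply pset_eq_trans; [exact HC|]. eapply pset_eq_trans; [apply image_ext; exact E|].
    apply phi_line.
Qed.

Lemma cl_M D : classical_circles D -> MC D.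
Proof.
  intros [[s [t [Hs E]]] | [a [b [c [Ha E]]]]].
  - destruct (Rlt_dec s 0).
    + left; right; exists s, t; auto.
    + right. exists (line_curve (- s) t). split; [right; exists (- s), t; split; [lra| intro; tauto]|].
      eapply pset_eq_trans; [exact E|]. apply pset_eq_sym.
      eapply pset_eq_trans; [apply phi_line|]. rewrite Ropp_involutive. intro; tauto.
  - destruct (Rlt_dec 0 a).
    + left; left. exists a, (- b), c. split; auto.
      eapply pset_eq_trans; [exact E|]. apply pset_eq_sym.
      eapply pset_eq_trans; [apply fabc_hyp; auto|]. rewrite Ropp_involutive. intro; tauto.
    + right. exists (fabc_curve f3 f4 (- a) b c).
      split; [left; exists (- a), b, c; split; [lra| intro; tauto]|].
      eapply pset_eq_trans; [exact E|]. apply pset_eq_sym.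
      eapply pset_eq_trans; [apply image_ext, fabc_hyp; auto; lra|].
      eapply pset_eq_trans; [apply phi_hyp|]. rewrite !Ropp_involutive. intro; tauto.
Qed.

Lemma image_id C : pset_eq (image (fun p => p) C) C.
Proof. intro p; split; [intros [q [Hq ->]]; auto| intro H; exists p; auto]. Qed.

Lemma if_dir : isomorphic MC classical_circles.
Proof.
  exists (fun p => p). split; [split; [auto| intro q; exists q; auto]|]. split.
  - intros C HC. apply cl_ext with C; [apply M_cl; auto| apply image_id].
  - intros D HD. exists D. split; [apply cl_M; auto| apply pset_eq_sym, image_id].
Qed.
End IfDir.

Theorem theorem5p5 (f1 f2 f3 f4 : R -> R) :
  strongly_hyperbolic f1 -> strongly_hyperbolic f2 ->
  strongly_hyperbolic f3 -> strongly_hyperbolic f4 ->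
  f1 1 = 1 -> f3 1 = 1 ->
  (isomorphic (M_circles f1 f2 f3 f4) classical_circles <->
   (forall x, 0 < x ->
      f1 x = 1 / x /\ f2 x = 1 / x /\ f3 x = 1 / x /\ f4 x = 1 / x)).
Proof.
  intros S1' S2' S3' S4' F1 F3. split.
  - intro Hiso. apply final; auto; apply sh_good; auto.
  - intro H. apply if_dir; intros x Hx; apply H; auto.
Qed.
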